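(* Let $d\ge3$ and $\beta>\beta^*(d)=\log\left(\frac{\sqrt{d-1}+1}{\sqrt{d-1}-1}\right)$. Then there exists $\varepsilon>0$ such that \[\mathcal{B}_{\mathrm{Ising}}(\pi^*_\varepsilon,\beta,d)>\log2+\frac d2\log\frac{1+e^{-\beta}}{2},\] where $\pi^*_\varepsilon=\frac12(\delta_{2\varepsilon}+\delta_{-2\varepsilon})$.
   Context: For a probability measure $\pi$ on $[-1,1]$ let $(\mu_{\pi,i})_{i\ge1}$ be independent samples from $\pi$, let $\Lambda(x)=x\log x$, and define the Bethe free energy \[\mathcal{B}_{\mathrm{Ising}}(\pi,\beta,d)=\mathbb{E}\left[\frac{\Lambda\left(\sum_{\sigma\in\{\pm1\}}\prod_{i=1}^d\left(1-(1-e^{-\beta})\frac{1+\sigma\mu_{\pi,i}}{2}\right)\right)}{2^{1-d}(1+e^{-\beta})^d}-\frac{d\,\Lambda\left(1-(1-e^{-\beta})\frac{1+\mu_{\pi,1}\mu_{\pi,2}}{2}\right)}{1+e^{-\beta}}\right].\] $\delta_x$ is the point mass at $x$. *)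

(* Defs.v *)
From Stdlib Require Import Reals List.
Import ListNotations.
Open Scope R_scope.

Definition Lambda (x : R) : R := x * ln x.

(* A finitely supported probability measure on [-1,1], given as a list of
   (atom, weight) pairs. *)
Definition fdist := list (R * R).

Definition is_prob_on_pm1 (p : fdist) : Prop :=
  (forall a w, In (a, w) p -> -1 <= a <= 1 /\ 0 <= w) /\
  fold_right (fun aw s => snd aw + s) 0 p = 1.

Fixpoint tuples (n : nat) (p : fdist) : list (list R * R) :=
  match n with
  | O => [([], 1)]
  | S n' => flat_map (fun aw => map (fun xp => (fst aw :: fst xp, snd aw * snd xp))
                                    (tuples n' p)) p
  end.

Definition expect_n (n : nat) (p : fdist) (f : list R -> R) : R :=
  fold_right (fun xp s => snd xp * f (fst xp) + s) 0 (tuples n p).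

Definition bethe_integrand (beta : R) (d : nat) (mu : list R) : R :=
  let q := 1 - exp (- beta) in
  Lambda (fold_right Rplus 0
            (map (fun sigma : R =>
                    fold_right Rmult 1
                      (map (fun m => 1 - q * ((1 + sigma * m) / 2)) mu))
                 [1; -1]))
    / (powerRZ 2 (1 - Z.of_nat d) * (1 + exp (- beta)) ^ d)
  - INR d * Lambda (1 - q * ((1 + nth 0 mu 0 * nth 1 mu 0) / 2))
    / (1 + exp (- beta)).

Definition bethe_ising (p : fdist) (beta : R) (d : nat) : R :=
  expect_n d p (bethe_integrand beta d).

Definition beta_star (d : nat) : R :=
  ln ((sqrt (INR d - 1) + 1) / (sqrt (INR d - 1) - 1)).

Definition pi_star (eps : R) : fdist := [(2 * eps, / 2); (- (2 * eps), / 2)].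

(* Main.v *)
Require Import Defs.
From Stdlib Require Import Reals List Lra Lia Psatz ZArith.
From Coquelicot Require Import Coquelicot.
Import ListNotations.
Open Scope R_scope.

Definition F1 (r : R) := ln r - 3/2 + 2/r - 1/(2*r*r).
Definition dF1 (r : R) := 1/r - 2/(r*r) + 1/(r*r*r).
Definition F2 (r : R) := ln r - r/2 + 1/(2*r).
Definition dF2 (r : R) := 1/r - 1/2 - 1/(2*r*r).

Lemma F1_der c : 0 < c -> derivable_pt_lim F1 c (dF1 c).
Proof.
  intro Hc. apply is_derive_Reals. unfold F1, dF1.
  auto_derive. repeat split; try lra; nra. field. lra.
Qed.

Lemma F2_der c : 0 < c -> derivable_pt_lim F2 c (dF2 c).
Proof.
  intro Hc. apply is_derive_Reals. unfold F2, dF2.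
  auto_derive. repeat split; try lra; nra. field. lra.
Qed.

Lemma dF1_nonneg c : 0 < c -> 0 <= dF1 c.
Proof.
  intro Hc. unfold dF1.
  replace (1/c - 2/(c*c) + 1/(c*c*c)) with ((c-1)*(c-1)/(c*c*c)) by (field; lra).
  unfold Rdiv. apply Rmult_le_pos. apply Rle_0_sqr. left. apply Rinv_0_lt_compat. apply Rmult_lt_0_compat; [apply Rmult_lt_0_compat|]; lra.
Qed.

Lemma dF2_nonpos c : 0 < c -> dF2 c <= 0.
Proof.
  intro Hc. unfold dF2.
  replace (1/c - 1/2 - 1/(2*c*c)) with (-((c-1)*(c-1)/(2*c*c))) by (field; lra).
  enough (0 <= (c-1)*(c-1)/(2*c*c)) by lra.
  unfold Rdiv. apply Rmult_le_pos. apply Rle_0_sqr. left. apply Rinv_0_lt_compat. apply Rmult_lt_0_compat; [apply Rmult_lt_0_compat|]; lra.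
Qed.

Lemma F1_1 : F1 1 = 0.
Proof. unfold F1. rewrite ln_1. field. Qed.
Lemma F2_1 : F2 1 = 0.
Proof. unfold F2. rewrite ln_1. field. Qed.

Lemma F1_sign x : 0 < x -> 0 <= (x - 1) * F1 x.
Proof.
  intro Hx. destruct (Rtotal_order x 1) as [H|[H|H]].
  - destruct (MVT_cor2 F1 dF1 x 1 H) as [c [Hc1 Hc2]].
    { intros c Hc. apply F1_der. lra. }
    rewrite F1_1 in Hc1. pose proof (dF1_nonneg c ltac:(lra)).
    assert (0 <= dF1 c * (1 - x)) by (apply Rmult_le_pos; lra).
    assert (F1 x <= 0) by lra. nra.
  - subst. lra.
  - destruct (MVT_cor2 F1 dF1 1 x H) as [c [Hc1 Hc2]].
    { intros c Hc. apply F1_der. lra. }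
    rewrite F1_1 in Hc1. pose proof (dF1_nonneg c ltac:(lra)).
    assert (0 <= dF1 c * (x - 1)) by (apply Rmult_le_pos; lra).
    assert (0 <= F1 x) by lra. nra.
Qed.

Lemma F2_sign x : 0 < x -> (x - 1) * F2 x <= 0.
Proof.
  intro Hx. destruct (Rtotal_order x 1) as [H|[H|H]].
  - destruct (MVT_cor2 F2 dF2 x 1 H) as [c [Hc1 Hc2]].
    { intros c Hc. apply F2_der. lra. }
    rewrite F2_1 in Hc1. pose proof (dF2_nonpos c ltac:(lra)).
    assert (0 <= - dF2 c * (1 - x)) by (apply Rmult_le_pos; lra).
    assert (0 <= F2 x) by lra. nra.
  - subst. lra.
  - destruct (MVT_cor2 F2 dF2 1 x H) as [c [Hc1 Hc2]].
    { intros c Hc. apply F2_der. lra. }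
    rewrite F2_1 in Hc1. pose proof (dF2_nonpos c ltac:(lra)).
    assert (0 <= - dF2 c * (x - 1)) by (apply Rmult_le_pos; lra).
    assert (F2 x <= 0) by lra. nra.
Qed.

Lemma div_mono X y Y : 0 <= X -> 0 < y -> y <= Y -> X / (2*Y) <= X / (2*y).
Proof.
  intros HX Hy HyY. unfold Rdiv. apply Rmult_le_compat_l; auto.
  apply Rinv_le_contravar; lra.
Qed.

Lemma pos_mul_sign_pos a b : 0 < a -> 0 <= a * b -> 0 <= b.
Proof. intros Ha H. destruct (Rle_or_lt 0 b); auto. nra. Qed.

Lemma Lambda_low S D Mx : 0 < S -> 0 < D -> S <= Mx -> D <= Mx ->
  S * ln D + (S - D) + (S - D)^2 / (2 * Mx) <= S * ln S.
Proof.
  intros HS HD HSM HDM.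
  assert (Hr : 0 < S / D) by (apply Rdiv_lt_0_compat; lra).
  assert (Hln : ln S = ln (S/D) + ln D).
  { rewrite <- ln_mult by lra. f_equal. field. lra. }
  rewrite Hln.
  assert (Hsq : 0 <= (S - D)^2) by (apply pow2_ge_0).
  destruct (Rtotal_order S D) as [H|[H|H]].
  -
    pose proof (F2_sign _ Hr) as HF.
    assert (HF2 : 0 <= F2 (S/D)).
    { apply (pos_mul_sign_pos (1 - S/D)). 
      assert (S/D < 1) by (apply (Rmult_lt_reg_r D); [lra| field_simplify; lra]). lra. nra. }
    assert (E : S * F2 (S/D) = S * ln (S/D) - ((S - D) + (S - D)^2/(2*D))).
    { unfold F2. field. lra. }
    assert (0 <= S * F2 (S/D)) by (apply Rmult_le_pos; lra).
    pose proof (div_mono ((S-D)^2) D Mx Hsq HD HDM). nra.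
  - subst. replace ((D - D)^2 / (2*Mx)) with 0 by (field; lra).
    replace (D/D) with 1 by (field; lra). rewrite ln_1. lra.
  - pose proof (F1_sign _ Hr) as HF.
    assert (HF1 : 0 <= F1 (S/D)).
    { apply (pos_mul_sign_pos (S/D - 1)). 
      assert (1 < S/D) by (apply (Rmult_lt_reg_r D); [lra| field_simplify; lra]). lra. nra. }
    assert (E : S * F1 (S/D) = S * ln (S/D) - ((S - D) + (S - D)^2/(2*S))).
    { unfold F1. field. lra. }
    assert (0 <= S * F1 (S/D)) by (apply Rmult_le_pos; lra).
    pose proof (div_mono ((S-D)^2) S Mx Hsq HS HSM). nra.
Qed.

Lemma Lambda_up z A m : 0 < m -> m <= z -> m <= A ->
  z * ln z <= z * ln A + (z - A) + (z - A)^2 / (2 * m).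
Proof.
  intros Hm HmZ HmA.
  assert (Hr : 0 < z / A) by (apply Rdiv_lt_0_compat; lra).
  assert (Hln : ln z = ln (z/A) + ln A).
  { rewrite <- ln_mult by lra. f_equal. field. lra. }
  rewrite Hln.
  assert (Hsq : 0 <= (z - A)^2) by (apply pow2_ge_0).
  destruct (Rtotal_order z A) as [H|[H|H]].
  - pose proof (F1_sign _ Hr) as HF.
    assert (HF1 : F1 (z/A) <= 0).
    { assert (z/A < 1) by (apply (Rmult_lt_reg_r A); [lra| field_simplify; lra]).
      assert (0 <= (1 - z/A) * (- F1 (z/A))) by nra.
      pose proof (pos_mul_sign_pos (1 - z/A) _ ltac:(lra) H1). lra. }
    assert (E : z * F1 (z/A) = z * ln (z/A) - ((z - A) + (z - A)^2/(2*z))).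
    { unfold F1. field. lra. }
    assert (z * F1 (z/A) <= 0).
    { assert (0 <= z * - F1 (z/A)) by (apply Rmult_le_pos; lra). lra. }
    pose proof (div_mono ((z-A)^2) m z Hsq Hm HmZ). nra.
  - subst. replace ((A - A)^2 / (2*m)) with 0 by (field; lra).
    replace (A/A) with 1 by (field; lra). rewrite ln_1. lra.
  - pose proof (F2_sign _ Hr) as HF.
    assert (HF2 : F2 (z/A) <= 0).
    { assert (1 < z/A) by (apply (Rmult_lt_reg_r A); [lra| field_simplify; lra]).
      assert (0 <= (z/A - 1) * (- F2 (z/A))) by nra.
      pose proof (pos_mul_sign_pos (z/A - 1) _ ltac:(lra) H1). lra. }
    assert (E : z * F2 (z/A) = z * ln (z/A) - ((z - A) + (z - A)^2/(2*A))).
    { unfold F2. field. lra. }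
    assert (z * F2 (z/A) <= 0).
    { assert (0 <= z * - F2 (z/A)) by (apply Rmult_le_pos; lra). lra. }
    pose proof (div_mono ((z-A)^2) m A Hsq Hm HmA). nra.
Qed.

Definition sumL (L : list (list R * R)) (f : list R -> R) : R :=
  fold_right (fun xp s => snd xp * f (fst xp) + s) 0 L.

Lemma sumL_app L1 L2 f : sumL (L1 ++ L2) f = sumL L1 f + sumL L2 f.
Proof. induction L1 as [|x L1 IH]; simpl. ring. rewrite IH. ring. Qed.

Lemma sumL_map_cons a w L f :
  sumL (map (fun xp => (a :: fst xp, w * snd xp)) L) f = w * sumL L (fun l => f (a :: l)).
Proof. induction L as [|x L IH]; simpl. ring. rewrite IH. ring. Qed.

Lemma sumL_flat n p p1 f :
  sumL (flat_map (fun aw => map (fun xp => (fst aw :: fst xp, snd aw * snd xp)) (tuples n p)) p1) f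
  = fold_right (fun aw acc => snd aw * sumL (tuples n p) (fun l => f (fst aw :: l)) + acc) 0 p1.
Proof.
  induction p1 as [|aw p1 IH]; simpl. reflexivity.
  rewrite sumL_app, sumL_map_cons, IH. reflexivity.
Qed.

Lemma expect_step n p f :
  expect_n (S n) p f =
  fold_right (fun aw acc => snd aw * expect_n n p (fun l => f (fst aw :: l)) + acc) 0 p.
Proof. exact (sumL_flat n p p f). Qed.

Lemma sumL_lin L c0 c1 c2 c3 c4 c5 c6 f1 f2 f3 f4 f5 f6 :
  sumL L (fun l => c0 + c1 * f1 l + c2 * f2 l + c3 * f3 l + c4 * f4 l + c5 * f5 l + c6 * f6 l)
  = c0 * sumL L (fun _ => 1) + c1 * sumL L f1 + c2 * sumL L f2 + c3 * sumL L f3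
    + c4 * sumL L f4 + c5 * sumL L f5 + c6 * sumL L f6.
Proof. induction L as [|x L IH]; simpl. ring. rewrite IH. ring. Qed.

Lemma sumL_scale L c f : sumL L (fun l => c * f l) = c * sumL L f.
Proof. induction L as [|x L IH]; simpl. ring. rewrite IH. ring. Qed.

Lemma sumL_mono L f g :
  (forall xp, In xp L -> 0 <= snd xp /\ f (fst xp) <= g (fst xp)) -> sumL L f <= sumL L g.
Proof.
  induction L as [|x L IH]; simpl; intros H. lra.
  destruct (H x (or_introl eq_refl)) as [H1 H2].
  assert (sumL L f <= sumL L g) by (apply IH; auto).
  pose proof (Rmult_le_compat_l _ _ _ H1 H2). lra.
Qed.

Lemma sumL_ext L f g : (forall l, f l = g l) -> sumL L f = sumL L g.
Proof. intros H. induction L as [|x L IH]; simpl. auto. rewrite IH, H. auto. Qed.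

Lemma E_scale n p c f : expect_n n p (fun l => c * f l) = c * expect_n n p f.
Proof. exact (sumL_scale _ c f). Qed.


Lemma E_step (eps : R) n f :
  expect_n (S n) (pi_star eps) f = /2 * expect_n n (pi_star eps) (fun l => f (2*eps :: l))
                      + /2 * expect_n n (pi_star eps) (fun l => f (-(2*eps) :: l)).
Proof. rewrite expect_step. simpl. ring. Qed.

Lemma E_const (eps : R) n c : expect_n n (pi_star eps) (fun _ => c) = c.
Proof.
  induction n as [|n IH]. unfold expect_n; simpl. ring.
  rewrite E_step. rewrite IH. field.
Qed.

Definition prodm (h : R -> R) (l : list R) := fold_right Rmult 1 (map h l).

Lemma E_prod (eps : R) n h : expect_n n (pi_star eps) (prodm h) = (/2 * h (2*eps) + /2 * h (-(2*eps)))^n.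
Proof.
  induction n as [|n IH]. unfold expect_n, prodm; simpl. ring.
  rewrite E_step. simpl prodm.
  change (fun l => prodm h (2 * eps :: l)) with (fun l => h (2*eps) * prodm h l).
  change (fun l => prodm h (- (2 * eps) :: l)) with (fun l => h (-(2*eps)) * prodm h l).
  rewrite !E_scale, IH. simpl. ring.
Qed.

Lemma E_m01 (eps : R) n : expect_n (S (S n)) (pi_star eps) (fun l => nth 0 l 0 * nth 1 l 0) = 0.
Proof.
  rewrite E_step. rewrite !E_step. simpl. rewrite !E_const. ring.
Qed.

Lemma tuples_in (eps : R) n xp : In xp (tuples n (pi_star eps)) ->
  length (fst xp) = n /\ List.Forall (fun m => m = 2*eps \/ m = -(2*eps)) (fst xp) /\ 0 <= snd xp.
Proof.
  revert xp. induction n as [|n IH]; intros xp H.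
  - simpl in H. destruct H as [H|[]]. subst. simpl. repeat split; auto. lra.
  - simpl in H. apply in_app_or in H. destruct H as [H|H]; [|apply in_app_or in H; destruct H as [H|[]]].
    all: apply in_map_iff in H; destruct H as [xp' [Heq Hin]]; subst xp; simpl;
    destruct (IH xp' Hin) as [H1 [H2 H3]]; repeat split; auto; try (apply Rmult_le_pos; lra).
Qed.

Lemma prodm_bound (P : R -> Prop) h c l :
  (forall m, P m -> 0 < h m <= c) -> List.Forall P l -> 0 < prodm h l <= c ^ length l.
Proof.
  intros Hh HF. induction HF as [|x l Hx HF IH]; unfold prodm in *; simpl. lra.
  destruct (Hh x Hx). destruct IH. split. apply Rmult_lt_0_compat; lra.
  apply Rmult_le_compat; lra.
Qed.

Lemma prodm_mul f g l : prodm f l * prodm g l = prodm (fun m => f m * g m) l.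
Proof. induction l as [|x l IH]; unfold prodm in *; simpl. ring. rewrite <- IH. ring. Qed.

Lemma binom_ineq n x : 0 <= x ->
  2 + INR n * (INR n - 1) * x^2 <= (1+x)^n + (1-x)^n /\ 2 * INR n * x <= (1+x)^n - (1-x)^n.
Proof.
  intros Hx. induction n as [|n [IH1 IH2]]. simpl. lra.
  rewrite S_INR. simpl.
  assert (H1 : x * (2 * INR n * x) <= x * ((1+x)^n - (1-x)^n)) by (apply Rmult_le_compat_l; lra).
  assert (H2 : x * 2 <= x * ((1+x)^n + (1-x)^n)).
  { apply Rmult_le_compat_l; auto. assert (0 <= INR n * (INR n - 1) * x^2).
    { destruct n. simpl. lra. rewrite S_INR. pose proof (pos_INR n). apply Rmult_le_pos; [nra|]. apply pow2_ge_0. }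
    lra. }
  split; nra.
Qed.

Lemma bern n u : 0 <= u -> INR n * u < 1 -> (1+u)^n * (1 - INR n * u) <= 1.
Proof.
  intros Hu. induction n as [|n IH]; intros H. simpl. lra.
  rewrite S_INR in *. simpl.
  assert (Hn : 0 <= INR n) by apply pos_INR.
  assert (IH' : (1+u)^n * (1 - INR n * u) <= 1) by (apply IH; nra).
  assert (Hp : 0 <= (1+u)^n) by (apply pow_le; lra).
  assert ((1+u)^n * ((1+u) * (1 - (INR n + 1) * u)) <= (1+u)^n * (1 - INR n * u)).
  { apply Rmult_le_compat_l; auto. nra. }
  nra.
Qed.

Lemma Dp d t : powerRZ 2 (1 - Z.of_nat d) * t^d = 2 * (t/2)^d.
Proof.
  replace (1 - Z.of_nat d)%Z with (1 + - Z.of_nat d)%Z by ring.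
  rewrite powerRZ_add by lra. rewrite powerRZ_neg' , powerRZ_1, <- pow_powerRZ.
  unfold Rdiv. rewrite Rpow_mult_distr, pow_inv. ring.
Qed.

Theorem proposition2p8 (d : nat) (beta : R) :
  (3 <= d)%nat -> beta > beta_star d ->
  exists eps : R, 0 < eps /\ is_prob_on_pm1 (pi_star eps) /\
    bethe_ising (pi_star eps) beta d >
      ln 2 + INR d / 2 * ln ((1 + exp (- beta)) / 2).
Proof.
  intros Hd Hbeta.
  set (nd := INR d).
  assert (Hnd : 3 <= nd) by (unfold nd; replace 3 with (INR 3) by (simpl; lra); apply le_INR; auto).
  set (r := sqrt (nd - 1)).
  assert (Hr2 : r * r = nd - 1) by (unfold r; apply sqrt_sqrt; lra).
  assert (Hr0 : 0 <= r) by (unfold r; apply sqrt_pos).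
  assert (Hr1 : 1 < r) by nra.
  set (t := exp (- beta)).
  assert (Ht0 : 0 < t) by (unfold t; apply exp_pos).
  assert (Htr : t * (r + 1) < r - 1).
  { unfold beta_star in Hbeta. fold nd r in Hbeta.
    assert (HX : 0 < (r + 1) / (r - 1)) by (apply Rdiv_lt_0_compat; lra).
    assert (He : (r + 1) / (r - 1) < exp beta).
    { rewrite <- (exp_ln _ HX). apply exp_increasing. lra. }
    unfold t. rewrite exp_Ropp.
    assert (Hb : 0 < exp beta) by apply exp_pos.
    apply (Rmult_lt_reg_r (exp beta)); auto.
    rewrite Rmult_assoc, (Rmult_comm (r+1)), <- Rmult_assoc, Rinv_l by lra.
    apply (Rmult_lt_reg_r (/ (r - 1))). apply Rinv_0_lt_compat; lra.
    replace ((r - 1) * exp beta * / (r - 1)) with (exp beta) by (field; lra).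
    replace (1 * (r + 1) * / (r - 1)) with ((r + 1) / (r - 1)) by (field; lra). lra. }
  assert (Ht1 : t < 1) by nra.
  set (a := (1 + t) / 2).
  set (b := (1 - t) / 2).
  set (th := b / a).
  assert (Ha : 0 < a) by (unfold a; lra).
  assert (Hb : 0 < b) by (unfold b; lra).
  assert (Hba : b = th * a) by (unfold th; field; lra).
  assert (Hth0 : 0 < th) by (unfold th; apply Rdiv_lt_0_compat; lra).
  assert (Hth1 : th < 1) by (unfold th, a, b; apply (Rmult_lt_reg_r ((1+t)/2)); [lra|]; field_simplify; lra).
  assert (Hthr : 1 < th * r).
  { unfold th, a, b. apply (Rmult_lt_reg_r ((1+t)/2)); [lra|].
    replace ((1 - t) / 2 / ((1 + t) / 2) * r * ((1 + t) / 2)) with ((1 - t) * r / 2) by (field; lra). nra. }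
  set (c := (nd - 1) * (th * th)).
  assert (Hc : 1 < c).
  { unfold c. rewrite <- Hr2. nra. }
  set (s := (c - 1) / (2 * c * (nd + 1))).
  assert (Hs0 : 0 < s) by (unfold s; apply Rdiv_lt_0_compat; nra).
  assert (Hs1 : (nd + 1) * s = (c - 1) / (2 * c)) by (unfold s; field; nra).
  assert (Hs2 : (nd + 1) * s < 1 / 2).
  { rewrite Hs1. apply (Rmult_lt_reg_r (2 * c)). lra. field_simplify; lra. }
  assert (Hs3 : s < 1 / 8) by nra.
  exists (s / 2).
  split; [lra|]. split.
  { unfold is_prob_on_pm1, pi_star. split.
    - intros a0 w Hin. simpl in Hin. destruct Hin as [H|[H|[]]]; inversion H; subst; lra.
    - simpl. lra. }

  set (eps := s / 2).
  assert (He : 2 * eps = s) by (unfold eps; field).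
  set (ps := pi_star eps).
  set (hP := fun m => 1 - (1 - t) * ((1 + 1 * m) / 2)).
  set (hM := fun m => 1 - (1 - t) * ((1 + -1 * m) / 2)).
  assert (HhP : forall m, hP m = a - b * m) by (intro m; unfold hP, a, b; field).
  assert (HhM : forall m, hM m = a + b * m) by (intro m; unfold hM, a, b; field).
  assert (Hbs : b * s < a) by (unfold a, b in *; nra).
  assert (Hbss : b * (s * s) < b * s) by (apply Rmult_lt_compat_l; nra).
  set (D := 2 * a ^ d).
  set (Mx := 2 * (a + b * s) ^ d).
  set (zm := a - b * (s * s)).
  set (K := nd / (1 + t)).
  assert (HD : 0 < D) by (unfold D; apply Rmult_lt_0_compat; [lra| apply pow_lt; lra]).
  assert (HDM : D <= Mx) by (unfold D, Mx; apply Rmult_le_compat_l; [lra|]; apply pow_incr; nra).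
  assert (HMx : 0 < Mx) by lra.
  assert (Hzm : 0 < zm) by (unfold zm; nra).
  set (c0 := -1 + D / (2 * Mx) - K * (a * ln a + b ^ 2 * ((s * s) * (s * s)) / (2 * zm))).
  set (c1 := (ln D + 1) / D - 1 / Mx).
  set (c3 := 1 / (2 * D * Mx)).
  set (c4 := 1 / (D * Mx)).
  set (c6 := K * b * (ln a + 1)).
  set (H := fun mu => c0 + c1 * prodm hP mu + c1 * prodm hM mu
                      + c3 * prodm (fun m => hP m * hP m) mu
                      + c4 * prodm (fun m => hP m * hM m) mu
                      + c3 * prodm (fun m => hM m * hM m) mu
                      + c6 * (nth 0 mu 0 * nth 1 mu 0)).
  assert (Hpt : forall mu, length mu = d -> List.Forall (fun m => m = 2 * eps \/ m = - (2 * eps)) mu ->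
             H mu <= bethe_integrand beta d mu).
  { intros mu Hlen HF.
    change (bethe_integrand beta d mu) with
      (Lambda (prodm hP mu + (prodm hM mu + 0)) / (powerRZ 2 (1 - Z.of_nat d) * (1 + t) ^ d)
       - nd * Lambda (1 - (1 - t) * ((1 + nth 0 mu 0 * nth 1 mu 0) / 2)) / (1 + t)).
    rewrite Dp. change (2 * ((1 + t) / 2) ^ d) with D.
    rewrite He in HF.
    assert (HPb : 0 < prodm hP mu <= (a + b * s) ^ length mu).
    { apply (prodm_bound (fun m => m = s \/ m = - s)); auto.
      intros m [Hm|Hm]; rewrite HhP; subst m; nra. }
    assert (HMb : 0 < prodm hM mu <= (a + b * s) ^ length mu).
    { apply (prodm_bound (fun m => m = s \/ m = - s)); auto.
      intros m [Hm|Hm]; rewrite HhM; subst m; nra. }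
    rewrite Hlen in HPb, HMb.
    destruct mu as [|m0 [|m1 rest]]; simpl in Hlen; try lia.
    inversion HF as [|? ? Hm0 HF1]; subst. inversion HF1 as [|? ? Hm1 HF2]; subst.
    set (P := prodm hP (m0 :: m1 :: rest)) in *.
    set (M := prodm hM (m0 :: m1 :: rest)) in *.
    change (nth 0 (m0 :: m1 :: rest) 0) with m0.
    change (nth 1 (m0 :: m1 :: rest) 0) with m1.
    assert (Hm01 : m0 * m1 = s * s \/ m0 * m1 = - (s * s)) by
      (destruct Hm0 as [->| ->]; destruct Hm1 as [->| ->]; [left|right|right|left]; ring).
    assert (HZ : 1 - (1 - t) * ((1 + m0 * m1) / 2) = a - b * (m0 * m1)) by (unfold a, b; field).
    rewrite HZ. replace (P + (M + 0)) with (P + M) by ring.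
    assert (LL := Lambda_low (P + M) D Mx ltac:(lra) HD ltac:(unfold Mx; lra) HDM).
    assert (LU := Lambda_up (a - b * (m0 * m1)) a zm Hzm
                    ltac:(unfold zm; destruct Hm01 as [-> | ->]; nra) ltac:(unfold zm; nra)).
    assert (Hsq : (a - b * (m0 * m1) - a) ^ 2 = b ^ 2 * ((s * s) * (s * s))).
    { destruct Hm01 as [-> | ->]; ring. }
    rewrite Hsq in LU.
    assert (I1 : (((P + M) * ln D + (P + M - D) + (P + M - D) ^ 2 / (2 * Mx))) / D
                 <= Lambda (P + M) / D).
    { unfold Rdiv. apply Rmult_le_compat_r. left; apply Rinv_0_lt_compat; lra. exact LL. }
    assert (I2 : nd * Lambda (a - b * (m0 * m1)) / (1 + t) <=
                 nd * ((a - b * (m0 * m1)) * ln a + (a - b * (m0 * m1) - a)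
                       + b ^ 2 * ((s * s) * (s * s)) / (2 * zm)) / (1 + t)).
    { unfold Rdiv. apply Rmult_le_compat_r. left; apply Rinv_0_lt_compat; lra.
      apply Rmult_le_compat_l. lra. exact LU. }
    assert (EqH : H (m0 :: m1 :: rest) =
        (((P + M) * ln D + (P + M - D) + (P + M - D) ^ 2 / (2 * Mx))) / D
        - nd * ((a - b * (m0 * m1)) * ln a + (a - b * (m0 * m1) - a)
                       + b ^ 2 * ((s * s) * (s * s)) / (2 * zm)) / (1 + t)).
    { unfold H. rewrite <- !prodm_mul. fold P M.
      change (nth 0 (m0 :: m1 :: rest) 0) with m0.
      change (nth 1 (m0 :: m1 :: rest) 0) with m1.
      unfold c0, c1, c3, c4, c6, K. field. repeat split; lra. }
    lra. }

  unfold bethe_ising. fold ps. unfold Rgt.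
  apply Rlt_le_trans with (expect_n d ps H).
  2: { change (sumL (tuples d ps) H <= sumL (tuples d ps) (bethe_integrand beta d)).
       apply sumL_mono. intros xp Hin.
       destruct (tuples_in eps d xp Hin) as [Hl [HF Hw]]. split; auto. }
  assert (EH : expect_n d ps H =
     c0 * expect_n d ps (fun _ => 1) + c1 * expect_n d ps (prodm hP)
     + c1 * expect_n d ps (prodm hM) + c3 * expect_n d ps (prodm (fun m => hP m * hP m))
     + c4 * expect_n d ps (prodm (fun m => hP m * hM m))
     + c3 * expect_n d ps (prodm (fun m => hM m * hM m))
     + c6 * expect_n d ps (fun l => nth 0 l 0 * nth 1 l 0)).
  { exact (sumL_lin (tuples d ps) c0 c1 c1 c3 c4 c3 c6 (prodm hP) (prodm hM)
             (prodm (fun m => hP m * hP m)) (prodm (fun m => hP m * hM m))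
             (prodm (fun m => hM m * hM m)) (fun l => nth 0 l 0 * nth 1 l 0)). }
  assert (Hm : expect_n d ps (fun l => nth 0 l 0 * nth 1 l 0) = 0).
  { destruct d as [|[|d']]; [lia|lia|]. apply E_m01. }
  rewrite EH, Hm. unfold ps. rewrite E_const, !E_prod. rewrite He.
  set (x := th * th * (s * s)).
  set (u := th * s).
  assert (E1 : / 2 * hP s + / 2 * hP (- s) = a) by (rewrite !HhP; field).
  assert (E2 : / 2 * hM s + / 2 * hM (- s) = a) by (rewrite !HhM; field).
  assert (E3 : / 2 * (hP s * hP s) + / 2 * (hP (- s) * hP (- s)) = (a * a) * (1 + x))
    by (rewrite !HhP; unfold x; rewrite Hba; field; lra).
  assert (E4 : / 2 * (hP s * hM s) + / 2 * (hP (- s) * hM (- s)) = (a * a) * (1 - x))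
    by (rewrite !HhP, !HhM; unfold x; rewrite Hba; field; lra).
  assert (E5 : / 2 * (hM s * hM s) + / 2 * (hM (- s) * hM (- s)) = (a * a) * (1 + x))
    by (rewrite !HhM; unfold x; rewrite Hba; field; lra).
  rewrite E1, E2, E3, E4, E5. rewrite !Rpow_mult_distr.
  change ((1 + t) / 2) with a.
  assert (HMx' : Mx = 2 * a ^ d * (1 + u) ^ d).
  { unfold Mx, u. rewrite Hba. replace (a + th * a * s) with (a * (1 + th * s)) by ring.
    rewrite Rpow_mult_distr. ring. }
  assert (HlnD : ln D = ln 2 + nd * ln a).
  { unfold D. rewrite ln_mult by (try apply pow_lt; lra). rewrite ln_pow by lra. reflexivity. }
  set (al := a ^ d) in *.
  set (Q1 := (1 + x) ^ d). set (Q2 := (1 - x) ^ d). set (Pu := (1 + u) ^ d).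
  assert (Hal : 0 < al) by (unfold al; apply pow_lt; lra).
  assert (HPu : 0 < Pu) by (unfold Pu; apply pow_lt; unfold u; nra).
  assert (Hths : 0 < 1 - th * (s * s)) by nra.
  assert (EV : c0 * 1 + c1 * al + c1 * al + c3 * (al * al * Q1) + c4 * (al * al * Q2)
               + c3 * (al * al * Q1) + c6 * 0
             = ln 2 + nd / 2 * ln a + (Q1 + Q2 - 2) / (4 * Pu)
               - nd * (th * th) * ((s * s) * (s * s)) / (4 * (1 - th * (s * s)))).
  { unfold c0, c1, c3, c4, c6, K. rewrite HlnD. unfold zm. rewrite HMx'. unfold D. 
    replace (1 + t) with (2 * a) by (unfold a; field). rewrite Hba.
    fold Pu. field. repeat split; try lra. intro Hc0. nra. }
  rewrite EV. clear EV EH.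

  assert (Hx : 0 <= x) by (unfold x; nra).
  destruct (binom_ineq d x Hx) as [HB _]. fold nd Q1 Q2 in HB.
  assert (Hu : 0 <= u) by (unfold u; nra).
  assert (Hus : u <= s) by (unfold u; nra).
  assert (Hndu : nd * u < 1 / 2).
  { assert (nd * u <= nd * s) by (apply Rmult_le_compat_l; lra). nra. }
  assert (HBe := bern d u Hu ltac:(fold nd; lra)). fold nd Pu in HBe.
  set (W := nd * (th * th) * ((s * s) * (s * s))).
  assert (HW : 0 < W).
  { unfold W. assert (0 < th * th) by (apply Rmult_lt_0_compat; lra).
    assert (0 < s * s) by (apply Rmult_lt_0_compat; lra).
    assert (0 < s * s * (s * s)) by (apply Rmult_lt_0_compat; lra).
    apply Rmult_lt_0_compat; [apply Rmult_lt_0_compat|]; lra. }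
  assert (HWc : nd * (nd - 1) * x ^ 2 = W * c) by (unfold W, c, x; ring).
  assert (Hkey : 1 < c * (1 - th * (s * s)) * (1 - nd * u)).
  { assert (h1 : 1 - s <= 1 - th * (s * s)) by nra.
    assert (h2 : 1 - nd * s <= 1 - nd * u).
    { assert (nd * u <= nd * s) by (apply Rmult_le_compat_l; lra). lra. }
    assert (h3 : (1 - s) * (1 - nd * s) <= (1 - th * (s * s)) * (1 - nd * u))
      by (apply Rmult_le_compat; nra).
    assert (h4 : 1 - (nd + 1) * s <= (1 - s) * (1 - nd * s)) by nra.
    assert (h5 : c * (1 - (nd + 1) * s) = (c + 1) / 2).
    { replace (c * (1 - (nd + 1) * s)) with (c - c * ((nd + 1) * s)) by ring.
      rewrite Hs1. field. lra. }
    assert (c * (1 - (nd + 1) * s) <= c * ((1 - th * (s * s)) * (1 - nd * u)))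
      by (apply Rmult_le_compat_l; lra).
    nra. }
  assert (HPlt : Pu < c * (1 - th * (s * s))).
  { destruct (Rlt_or_le Pu (c * (1 - th * (s * s)))) as [h|h]; auto.
    assert (c * (1 - th * (s * s)) * (1 - nd * u) <= Pu * (1 - nd * u))
      by (apply Rmult_le_compat_r; lra). lra. }
  assert (F1 : W / (4 * (1 - th * (s * s))) < W * c / (4 * Pu)).
  { apply (Rmult_lt_reg_r (4 * (1 - th * (s * s)) * Pu)). nra.
    replace (W / (4 * (1 - th * (s * s))) * (4 * (1 - th * (s * s)) * Pu)) with (W * Pu) by (field; lra).
    replace (W * c / (4 * Pu) * (4 * (1 - th * (s * s)) * Pu)) with (W * (c * (1 - th * (s * s)))) by (field; lra).
    apply Rmult_lt_compat_l; lra. }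
  assert (F2 : W * c / (4 * Pu) <= (Q1 + Q2 - 2) / (4 * Pu)).
  { unfold Rdiv. apply Rmult_le_compat_r. left; apply Rinv_0_lt_compat; lra. lra. }
  lra.
Qed.
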